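(* Let $K\subseteq\mathbb{R}^d$ be a convex body with $\mathrm{width}(K)>0$. Then $\lambda_d(K-K)\le\frac{\mathrm{Flt}(d)}{\mathrm{width}(K)}$.
   Context: A convex body is a non-empty compact convex subset of $\mathbb{R}^d$; $\mathrm{width}(K)=\min_{u\in(\mathbb{Z}^d)^*\setminus\{0\}}\max_{x,y\in K}|u(x)-u(y)|$; $\mathrm{Flt}(d)=\sup\{\mathrm{width}(K): K\text{ convex body}, K\cap\mathbb{Z}^d=\emptyset\}$. The difference body is $K-K=\{x-y:x,y\in K\}$, and its $d$-th successive minimum is $\lambda_d(K-K)=\inf\{\lambda>0:\dim\mathrm{span}(\lambda(K-K)\cap\mathbb{Z}^d)=d\}$. *)

(* Defs.v *)
From mathcomp Require Import ssreflect ssrfun ssrbool eqtype ssrnat fintype bigop.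
From Stdlib Require Import Reals ZArith.

Set Implicit Arguments.
Unset Strict Implicit.

Local Open Scope R_scope.

Definition Rd (d : nat) := 'I_d -> R.

Definition dotR (d : nat) (u x : Rd d) : R := \big[Rplus/0]_(i < d) (u i * x i).

Definition is_lattice_point (d : nat) (x : Rd d) : Prop :=
  forall i : 'I_d, exists z : Z, x i = IZR z.

Definition IZRv (d : nat) (u : 'I_d -> Z) : Rd d := fun i => IZR (u i).

Definition convex (d : nat) (K : Rd d -> Prop) : Prop :=
  forall x y t, K x -> K y -> 0 <= t <= 1 -> K (fun i => t * x i + (1 - t) * y i).

Definition closed_set (d : nat) (K : Rd d -> Prop) : Prop :=
  forall x : Rd d,
    (forall eps, 0 < eps -> exists y, K y /\ forall i, Rabs (x i - y i) < eps) -> K x.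

Definition bounded_set (d : nat) (K : Rd d -> Prop) : Prop :=
  exists M, forall x, K x -> forall i, Rabs (x i) <= M.

Definition convex_body (d : nat) (K : Rd d -> Prop) : Prop :=
  (exists x, K x) /\ convex K /\ closed_set K /\ bounded_set K.

Definition lattice_free (d : nat) (K : Rd d -> Prop) : Prop :=
  forall x, K x -> ~ is_lattice_point x.

Definition is_glb (E : R -> Prop) (m : R) : Prop :=
  (forall t, E t -> m <= t) /\ (forall m', (forall t, E t -> m' <= t) -> m' <= m).

(* w = max_{x,y in K} |u(x) - u(y)|  (the max exists by compactness, so it equals the sup) *)
Definition is_dir_width (d : nat) (K : Rd d -> Prop) (u : 'I_d -> Z) (w : R) : Prop :=
  is_lub (fun r => exists x y, K x /\ K y /\ r = Rabs (dotR (IZRv u) x - dotR (IZRv u) y)) w.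

Definition nonzero_int_vec (d : nat) (u : 'I_d -> Z) : Prop :=
  exists i, u i <> 0%Z.

Definition is_width (d : nat) (K : Rd d -> Prop) (w : R) : Prop :=
  (exists u, nonzero_int_vec u /\ is_dir_width K u w) /\
  (forall u v, nonzero_int_vec u -> is_dir_width K u v -> w <= v).

Definition is_Flt (d : nat) (F : R) : Prop :=
  is_lub (fun r => exists K : Rd d -> Prop,
            convex_body K /\ lattice_free K /\ is_width K r) F.

Definition in_scaled_diff (d : nat) (t : R) (K : Rd d -> Prop) (z : Rd d) : Prop :=
  exists x y, K x /\ K y /\ forall i, z i = t * (x i - y i).

Definition lin_indep (d : nat) (v : 'I_d -> Rd d) : Prop :=
  forall c : 'I_d -> R,
    (forall j : 'I_d, \big[Rplus/0]_(i < d) (c i * v i j) = 0) -> forall i, c i = 0.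

Definition full_lattice_span (d : nat) (t : R) (K : Rd d -> Prop) : Prop :=
  exists v : 'I_d -> Rd d,
    (forall i, in_scaled_diff t K (v i) /\ is_lattice_point (v i)) /\ lin_indep v.

Definition is_lambda_d (d : nat) (K : Rd d -> Prop) (l : R) : Prop :=
  is_glb (fun t => 0 < t /\ full_lattice_span t K) l.

(* Main.v *)
Require Import Defs.
From Stdlib Require Import Reals ZArith Classical FunctionalExtensionality ClassicalEpsilon Lra Lia.
From mathcomp Require Import all_boot all_order all_algebra.
From mathcomp Require Import Rstruct ssrZ.
Import Order.TTheory GRing.Theory Num.Theory.
Set Implicit Arguments.
Unset Strict Implicit.
Unset Printing Implicit Defensive.
Lemma aux_comb (x y z a b : R) : Rmult x (Rplus (Rmult a y) (Rmult b z)) = Rplus (Rmult a (Rmult x y)) (Rmult b (Rmult x z)).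
Proof. ring. Qed.
Section Helpers.
Local Open Scope ring_scope.

Lemma dotR_ext d (u f g : Rd d) : (forall i, f i = g i) -> dotR u f = dotR u g.
Proof. by move=> H; apply: eq_bigr => i _; rewrite H. Qed.


Lemma dotR_comb d (u x y : Rd d) (a b : R) :
  dotR u (fun i => Rplus (Rmult a (x i)) (Rmult b (y i))) = Rplus (Rmult a (dotR u x)) (Rmult b (dotR u y)).
Proof.
change (\sum_(i<d) (u i * (a * x i + b * y i)) = a * \sum_(i<d) (u i * x i) + b * \sum_(i<d)(u i * y i)).
rewrite !mulr_sumr -big_split /=; apply: eq_bigr => i _; exact: aux_comb.
Qed.

Lemma dotR_single d (u : Rd d) j (s : R) :
  dotR u (fun i => if i == j then s else R0) = Rmult (u j) s.
Proof.
change (\sum_(i<d) (u i * (if i == j then s else 0)) = u j * s).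
rewrite (bigD1 j) //= eqxx big1 ?addr0 // => i /negbTE ->.
exact: (mulr0 (u i)).
Qed.

Lemma vec_bound d (c : Rd d) : exists M, forall i, Rle (Rabs (c i)) M.
Proof.
exists (\sum_(i < d) `|c i|) => i; apply/RleP; have -> : Rabs (c i) = `|c i| by [].
by rewrite (bigD1 i) //= lerDl sumr_ge0.
Qed.

Lemma dotR_bound d (u x : Rd d) (M : R) :
  (forall i, Rle (Rabs (x i)) M) -> Rle (Rabs (dotR u x)) (GRing.mul (\sum_(i < d) `|u i|) M).
Proof.
move=> H; apply/RleP; have -> : Rabs (dotR u x) = `|dotR u x| by [].
rewrite /dotR -/(\sum_(i < d) _) mulr_suml.
apply: le_trans (ler_norm_sum _ _ _) _; apply: ler_sum => i _.
by rewrite normrM ler_wpM2l //; apply/RleP.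
Qed.
End Helpers.
Section LA.
Local Open Scope ring_scope.

Lemma LA d (S : Rd d -> Prop) :
  S (fun _ => 0) ->
  ~ (exists v : 'I_d -> Rd d, (forall i, S (v i)) /\ lin_indep v) ->
  exists u : Rd d, (exists j, u j <> 0) /\ forall s, S s -> dotR u s = 0.
Proof.
move=> S0 Hn.
pose P r := exists M : 'M[R]_(r,d), (forall i, S (fun j => M i j)) /\ row_free M.
have P0 : P 0%N.
  exists 0; split; first by case.
  by rewrite /row_free mxrank0.
have Pd : forall r, P r -> (r <= d)%N.
  by move=> r [M [_ /eqP <-]]; exact: rank_leq_col.
have [r [Pr nPr]] : exists r, P r /\ ~ P (r + 1)%N.
  apply: NNPP => H.
  have : forall n, P n.
    elim=> // n IH; apply: NNPP => Hn'; apply: H; exists n; split => //.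
    by rewrite addn1.
  by move=> /(_ d.+1) /Pd; rewrite ltnn.
have rd := Pd r Pr.
case: Pr => M [MS Mfree].
have Msub : forall s, S s -> (\row_j s j <= M)%MS.
  move=> s Ss; apply/negPn/negP => ns; apply: nPr.
  exists (col_mx M (\row_j s j)); split.
    move=> i; rewrite -(splitK i); case: (split i) => k /=.
      have -> : (fun j => col_mx M (\row_j0 s j0) (lshift 1 k) j) = (fun j => M k j).
        by apply: functional_extensionality => j; rewrite col_mxEu.
      exact: MS.
    have -> : (fun j => col_mx M (\row_j0 s j0) (rshift r k) j) = s.
      by apply: functional_extensionality => j; rewrite col_mxEd mxE.
    exact: Ss.
  have sub : (M <= col_mx M (\row_j s j))%MS by rewrite -addsmxE addsmxSl.
  have := ltn_leqif (mxrank_leqif_sup sub).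
  rewrite col_mx_sub submx_refl /= ns => lt.
  rewrite /row_free eqn_leq rank_leq_row /=.
  apply: leq_trans _ lt; by rewrite (eqP Mfree) addn1.
move: rd; rewrite leq_eqVlt => /orP [/eqP erd | ltrd].
  subst r; exfalso; apply: Hn.
  exists (fun i j => M i j); split; first by [].
  move=> c Hc i.
  have : (\row_k c k) *m M = 0.
    apply/rowP => j; rewrite !mxE -[RHS](Hc j).
    by apply: eq_bigr => k _; rewrite mxE.
  move/eqP; rewrite mulmx_free_eq0 // => /eqP/rowP/(_ i).
  by rewrite !mxE.
set Ker := kermx M^T.
have rk : \rank Ker = (d - r)%N by rewrite mxrank_ker mxrank_tr (eqP Mfree).
have Knz : Ker != 0 by rewrite -mxrank_eq0 rk subn_eq0 -ltnNge.
have [k [j Hkj]] : exists k j, Ker k j <> 0.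
  apply: NNPP => H; move/negP: Knz; apply; apply/eqP/matrixP => k j.
  rewrite [RHS]mxE; apply: NNPP => H'; apply: H; exists k, j; exact: H'.
exists (fun j => Ker k j); split; first by exists j.
move=> s Ss; case/submxP: (Msub s Ss) => D HD.
have : (\row_j s j) *m (row k Ker)^T = 0.
  rewrite HD -mulmxA.
  have -> : M *m (row k Ker)^T = (row k Ker *m M^T)^T by rewrite trmx_mul trmxK.
  by rewrite -row_mul mulmx_ker row0 trmx0 mulmx0.
move/matrixP => /(_ 0 0); rewrite !mxE => H.
rewrite -[RHS]H; apply: eq_bigr => i _; rewrite !mxE; exact: mulrC.
Qed.
End LA.

Local Open Scope R_scope.

Lemma lub_scale (E E' : R -> Prop) t v : 0 < t ->
  (forall r, E' r <-> exists r0, E r0 /\ r = t * r0) -> is_lub E v -> is_lub E' (t * v).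
Proof.
  intros Ht HE [Hub Hl]. split.
  - intros r Hr. apply HE in Hr as [r0 [Hr0 ->]].
    apply Rmult_le_compat_l; [lra| apply Hub; auto].
  - intros b Hb.
    assert (Hv : v <= b / t).
    { apply Hl. intros r0 Hr0.
      assert (t * r0 <= b) by (apply Hb, HE; eauto).
      apply (Rmult_le_reg_l t); [lra|].
      replace (t * (b / t)) with b by (field; lra). lra. }
    apply (Rmult_le_compat_l t) in Hv; [|lra].
    replace (t * (b / t)) with b in Hv by (field; lra). lra.
Qed.

Lemma rel_inv (E E' : R -> Prop) t : 0 < t ->
  (forall r, E' r <-> exists r0, E r0 /\ r = t * r0) ->
  (forall r0, E r0 <-> exists r, E' r /\ r0 = / t * r).
Proof.
  intros Ht HE r0. split.
  - intros H. exists (t * r0). split; [apply HE; eauto| field; lra].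
  - intros [r [Hr ->]]. apply HE in Hr as [r1 [Hr1 ->]].
    replace (/ t * (t * r1)) with r1 by (field; lra). exact Hr1.
Qed.

Definition Kimg d (K : Rd d -> Prop) (c : Rd d) (t : R) : Rd d -> Prop :=
  fun z => exists y, K y /\ forall i, z i = c i + t * y i.

Lemma dotR_aff d (u z c y : Rd d) t :
  (forall i, z i = c i + t * y i) -> dotR u z = dotR u c + t * dotR u y.
Proof.
  intros H. rewrite (@dotR_ext d u z (fun i => 1 * c i + t * y i)).
  - rewrite dotR_comb. ring.
  - intros i. rewrite H. ring.
Qed.

Lemma dirset_img d (K : Rd d -> Prop) c t (u : 'I_d -> Z) : 0 < t -> forall r,
  (exists x y, Kimg K c t x /\ Kimg K c t y /\ r = Rabs (dotR (IZRv u) x - dotR (IZRv u) y))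
  <-> exists r0, (exists x y, K x /\ K y /\ r0 = Rabs (dotR (IZRv u) x - dotR (IZRv u) y))
                 /\ r = t * r0.
Proof.
  intros Ht r. split.
  - intros [x [y [[x0 [Hx0 Ex]] [[y0 [Hy0 Ey]] ->]]]].
    exists (Rabs (dotR (IZRv u) x0 - dotR (IZRv u) y0)). split; [exists x0, y0; auto|].
    rewrite (dotR_aff _ Ex) (dotR_aff _ Ey).
    replace (dotR (IZRv u) c + t * dotR (IZRv u) x0 - (dotR (IZRv u) c + t * dotR (IZRv u) y0))
      with (t * (dotR (IZRv u) x0 - dotR (IZRv u) y0)) by ring.
    rewrite Rabs_mult (Rabs_pos_eq t); lra.
  - intros [r0 [[x0 [y0 [Hx0 [Hy0 ->]]]] ->]].
    exists (fun i => c i + t * x0 i), (fun i => c i + t * y0 i).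
    split; [exists x0; split; auto|]. split; [exists y0; split; auto|].
    rewrite (@dotR_aff d (IZRv u) (fun i => c i + t * x0 i) c x0 t); [|intros; reflexivity].
    rewrite (@dotR_aff d (IZRv u) (fun i => c i + t * y0 i) c y0 t); [|intros; reflexivity].
    replace (dotR (IZRv u) c + t * dotR (IZRv u) x0 - (dotR (IZRv u) c + t * dotR (IZRv u) y0))
      with (t * (dotR (IZRv u) x0 - dotR (IZRv u) y0)) by ring.
    rewrite Rabs_mult (Rabs_pos_eq t); lra.
Qed.

Lemma width_img d (K : Rd d -> Prop) c t w : 0 < t -> is_width K w -> is_width (Kimg K c t) (t * w).
Proof.
  intros Ht [[u0 [Hu0 Hw0]] Hmin]. split.
  - exists u0. split; [exact Hu0|]. unfold is_dir_width.
    eapply lub_scale; [exact Ht| |exact Hw0]. apply dirset_img; exact Ht.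
  - intros u v Hu Hv.
    assert (Hv' : is_dir_width K u (/ t * v)).
    { unfold is_dir_width. eapply lub_scale; [apply Rinv_0_lt_compat; exact Ht| |exact Hv].
      apply rel_inv; [exact Ht|]. apply dirset_img; exact Ht. }
    pose proof (Hmin u _ Hu Hv') as H.
    apply (Rmult_le_compat_l t) in H; [|lra].
    replace (t * (/ t * v)) with v in H by (field; lra). exact H.
Qed.

Lemma body_img d (K : Rd d -> Prop) c t : 0 < t -> convex_body K -> convex_body (Kimg K c t).
Proof.
  intros Ht [[x0 Hx0] [Hconv [Hcl [M HM]]]]. split; [|split; [|split]].
  - exists (fun i => c i + t * x0 i). exists x0. split; auto.
  - intros x y s [x1 [Hx1 Ex]] [y1 [Hy1 Ey]] Hs.
    exists (fun i => s * x1 i + (1 - s) * y1 i). split; [apply Hconv; auto|].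
    intros i. rewrite Ex Ey. ring.
  - intros z Hz. exists (fun i => (z i - c i) / t). split.
    + apply Hcl. intros eps Heps.
      destruct (Hz (eps * t)) as [y [[y1 [Hy1 Ey]] Hy]]; [nra|].
      exists y1. split; [exact Hy1|]. intros i.
      specialize (Hy i). rewrite Ey in Hy.
      replace ((z i - c i) / t - y1 i) with ((z i - (c i + t * y1 i)) / t) by (field; lra).
      unfold Rdiv. rewrite Rabs_mult (Rabs_pos_eq (/ t)); [|left; apply Rinv_0_lt_compat; lra].
      apply (Rmult_lt_reg_r t); [lra|].
      replace (Rabs (z i - (c i + t * y1 i)) * / t * t) with (Rabs (z i - (c i + t * y1 i)))
        by (field; lra). exact Hy.
    + intros i. field. lra.
  - destruct (vec_bound c) as [Mc HMc]. exists (Mc + t * M).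
    intros z [y [Hy Ez]] i. rewrite Ez.
    apply Rle_trans with (Rabs (c i) + Rabs (t * y i)); [apply Rabs_triang|].
    rewrite Rabs_mult (Rabs_pos_eq t); [|lra].
    pose proof (HMc i). pose proof (HM y Hy i). nra.
Qed.

Lemma cover d (K : Rd d -> Prop) w F t : convex_body K -> is_width K w -> is_Flt d F ->
  0 < t -> F < t * w ->
  forall c, exists p y, is_lattice_point p /\ K y /\ forall i, p i = c i + t * y i.
Proof.
  intros HK Hw HF Ht Hlt c. apply NNPP; intro Hn.
  assert (Hlf : lattice_free (Kimg K c t)).
  { intros x [y [Hy Ex]] Hl. apply Hn. exists x, y. auto. }
  assert (t * w <= F).
  { apply (proj1 HF). exists (Kimg K c t). split; [apply body_img; auto| split; auto].
    apply width_img; auto. }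
  lra.
Qed.

Lemma dotR_zero d (u : Rd d) : dotR u (fun _ => 0) = 0.
Proof.
  rewrite (@dotR_ext d u (fun _ => 0) (fun i => 0 * u i + 0 * u i)); [|intros; ring].
  rewrite dotR_comb. ring.
Qed.

Lemma dotR_diff d (u x y : Rd d) : dotR u (fun i => x i - y i) = dotR u x - dotR u y.
Proof.
  rewrite (@dotR_ext d u (fun i => x i - y i) (fun i => 1 * x i + (-1) * y i)); [|intros; ring].
  rewrite dotR_comb. ring.
Qed.

Lemma Kbound d (K : Rd d -> Prop) (u : Rd d) : bounded_set K ->
  exists B, forall y, K y -> Rabs (dotR u y) <= B.
Proof.
  intros [M HM]. eexists. intros y Hy. apply dotR_bound. apply HM. exact Hy.
Qed.

Lemma slide d (K : Rd d -> Prop) t t' (u : Rd d) : convex_body K -> 0 < t -> t < t' ->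
  (forall c, exists p y, is_lattice_point p /\ K y /\ forall i, p i = c i + t * y i) ->
  (forall z, in_scaled_diff t' K z -> is_lattice_point z -> dotR u z = 0) ->
  forall x y, K x -> K y -> dotR u x = dotR u y.
Proof.
  intros [_ [Hconv [_ Hbd]]] Ht Htt Hcov Hann x1 y1 Hx1 Hy1.
  apply NNPP; intro Hne.
  destruct (Kbound u Hbd) as [B HB].
  pose v := fun i => (t' - t) * (x1 i - y1 i).
  destruct (Hcov (fun _ => 0)) as [p0 [y0 [Hp0 [Hy0 Ep0]]]].
  assert (Hq : 0 < t / t' < 1).
  { split; [apply Rdiv_lt_0_compat; lra|].
    apply (Rmult_lt_reg_r t'); [lra|]. unfold Rdiv. rewrite Rmult_assoc Rinv_l; lra. }
  assert (Hs : 0 <= (t' - t) / t' <= 1).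
  { replace ((t' - t) / t') with (1 - t / t') by (field; lra). lra. }
  assert (Hind : forall n : nat, exists p y, is_lattice_point p /\ K y /\
            (forall i, p i = INR n * v i + t * y i) /\ dotR u p = dotR u p0).
  { intro n; induction n as [|n IH].
    - exists p0, y0. repeat split; auto. intros i. rewrite Ep0. simpl. ring.
    - destruct IH as [p [y [Hp [Hy [Ep Eu]]]]].
      destruct (Hcov (fun i => INR (S n) * v i)) as [p' [y' [Hp' [Hy' Ep']]]].
      exists p', y'. repeat split; auto.
      rewrite -Eu.
      assert (Hz : dotR u (fun i => p' i - p i) = 0).
      { apply Hann.
        - exists (fun i => ((t'-t)/t') * x1 i + (1 - (t'-t)/t') * y' i),
                 (fun i => ((t'-t)/t') * y1 i + (1 - (t'-t)/t') * y i).
          split; [apply Hconv; auto|]. split; [apply Hconv; auto|].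
          intros i. rewrite Ep' Ep S_INR. unfold v. field. lra.
        - intros i. destruct (Hp' i) as [a Ha], (Hp i) as [b Hb]. exists (Z.sub a b).
          rewrite minus_IZR. lra. }
      rewrite dotR_diff in Hz. lra. }
  pose delta := (t' - t) * (dotR u x1 - dotR u y1).
  assert (Hd : delta <> 0).
  { unfold delta. intro H. apply Rmult_integral in H as [H|H]; [lra|]. apply Hne. lra. }
  assert (Hdpos : 0 < Rabs delta) by (apply Rabs_pos_lt; exact Hd).
  destruct (INR_unbounded (2 * t * (Rabs B) / Rabs delta)) as [n Hn].
  destruct (Hind n) as [p [y [Hp [Hy [Ep Eu]]]]].
  rewrite (@dotR_aff d u p (fun i => INR n * v i) y t Ep) in Eu.
  rewrite (@dotR_aff d u p0 (fun _ => 0) y0 t Ep0) dotR_zero in Eu.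
  rewrite (@dotR_ext d u (fun i => INR n * v i) (fun i => (INR n * (t'-t)) * x1 i + (- (INR n * (t'-t))) * y1 i)) in Eu; [|intros i; unfold v; ring].
  rewrite dotR_comb in Eu.
  assert (E2 : INR n * delta = t * (dotR u y0 - dotR u y)) by (unfold delta; lra).
  pose proof (HB y Hy) as B1. pose proof (HB y0 Hy0) as B2.
  assert (Hle : Rabs (INR n * delta) <= 2 * t * Rabs B).
  { rewrite E2 Rabs_mult (Rabs_pos_eq t); [|lra].
    pose proof (Rabs_triang (dotR u y0) (- dotR u y)) as Tr. rewrite Rabs_Ropp in Tr.
    pose proof (Rle_abs B).
    assert (Rabs (dotR u y0 - dotR u y) <= 2 * Rabs B) by (unfold Rminus; lra).
    replace (2 * t * Rabs B) with (t * (2 * Rabs B)) by ring.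
    apply Rmult_le_compat_l; lra. }
  rewrite Rabs_mult (Rabs_pos_eq (INR n)) in Hle; [|apply pos_INR].
  apply (Rmult_gt_compat_r (Rabs delta)) in Hn; [|exact Hdpos].
  replace (2 * t * Rabs B / Rabs delta * Rabs delta) with (2 * t * Rabs B) in Hn by (field; lra).
  lra.
Qed.
Fixpoint iv (f : nat -> R) (n : nat) : R * R :=
 match n with
 | O => (0,1)
 | S m => let (a,b) := iv f m in
   if Rlt_dec (f m) (a + 2*(b-a)/3) then (a + 2*(b-a)/3, b) else (a, a + (b-a)/3)
 end.

Lemma iv_props f n :
  fst (iv f n) < snd (iv f n) /\
  fst (iv f n) <= fst (iv f (S n)) /\ snd (iv f (S n)) <= snd (iv f n) /\
  ~ (fst (iv f (S n)) <= f n <= snd (iv f (S n))).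
Proof.
  induction n as [|m IH].
  - simpl. destruct (Rlt_dec (f 0%nat) (0 + 2*(1-0)/3)); simpl; lra.
  - destruct IH as [H1 _].
    assert (Hs : fst (iv f (S m)) < snd (iv f (S m))).
    { simpl. destruct (iv f m) as [a b]. simpl in H1.
      destruct (Rlt_dec (f m) (a + 2*(b-a)/3)); simpl; lra. }
    split; [exact Hs|].
    change (iv f (S (S m))) with
      (let (a,b) := iv f (S m) in
       if Rlt_dec (f (S m)) (a + 2*(b-a)/3) then (a + 2*(b-a)/3, b) else (a, a + (b-a)/3)).
    destruct (iv f (S m)) as [a b]. simpl in Hs |- *.
    destruct (Rlt_dec (f (S m)) (a + 2*(b-a)/3)); simpl; lra.
Qed.

Lemma iv_mono f m k : fst (iv f m) <= fst (iv f (m + k)) /\ snd (iv f (m + k)) <= snd (iv f m).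
Proof.
  induction k as [|k IH].
  - rewrite addn0; lra.
  - rewrite addnS. destruct (iv_props f (m + k)) as [_ [H2 [H3 _]]]. lra.
Qed.

Lemma iv_le f m n : fst (iv f m) <= snd (iv f n).
Proof.
  destruct (iv_mono f m n) as [H1 _]. destruct (iv_mono f n m) as [_ H2].
  destruct (iv_props f (m + n)) as [H3 _]. rewrite addnC in H2. lra.
Qed.

Lemma R_not_enum (f : nat -> R) : exists x, forall n, f n <> x.
Proof.
  pose (E := fun x => exists n, x = fst (iv f n)).
  assert (HB : bound E). { exists 1. intros x [n ->]. apply (iv_le f n 0). }
  assert (HE : exists x, E x). { exists 0. exists 0%nat. reflexivity. }
  destruct (completeness E HB HE) as [x [Hub Hl]].
  exists x. intros n Hn.
  destruct (iv_props f n) as [_ [_ [_ H4]]]. apply H4.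
  split.
  - rewrite Hn. apply Hub. exists (S n). reflexivity.
  - rewrite Hn. apply Hl. intros y [k ->]. apply iv_le.
Qed.

Lemma flat d (K : Rd d -> Prop) t (u : Rd d) : convex_body K -> 0 < t ->
  (forall c, exists p y, is_lattice_point p /\ K y /\ forall i, p i = c i + t * y i) ->
  (exists j, u j <> 0) -> (forall x y, K x -> K y -> dotR u x = dotR u y) -> False.
Proof.
  intros [[x0 Hx0] _] Ht Hcov [j Hj] Hconst.
  assert (Hall : forall r, exists p, is_lattice_point p /\ dotR u p = r).
  { intro r.
    destruct (Hcov (fun i => if i == j then (r - t * dotR u x0) / u j else 0))
      as [p [y [Hp [Hy Ep]]]].
    exists p. split; auto.
    rewrite (dotR_aff u Ep) dotR_single (Hconst y x0 Hy Hx0). field. exact Hj. }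
  pose g := fun n : nat => match unpickle n : option {ffun 'I_d -> Z} with
                           | Some h => fun i => IZR (h i) | None => fun _ => 0 end.
  destruct (R_not_enum (fun n => dotR u (g n))) as [r Hr].
  destruct (Hall r) as [p [Hp Ep]].
  pose zf := fun i => proj1_sig (constructive_indefinite_description _ (Hp i)).
  pose h := [ffun i => zf i] : {ffun 'I_d -> Z}.
  apply (Hr (pickle h)). unfold g. rewrite pickleK -Ep. apply dotR_ext. intros i.
  rewrite ffunE. unfold zf.
  destruct (constructive_indefinite_description _ _) as [z Hz]. simpl. auto.
Qed.

Lemma Flt_nonneg d F : is_Flt d F -> 0 <= F.
Proof.
  intros [Hub Hl].
  apply NNPP; intro Hn.
  assert (Hex : exists r, exists K : Rd d -> Prop, convex_body K /\ lattice_free K /\ is_width K r).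
  { apply NNPP; intro H. assert (F <= F - 1); [|lra].
    apply Hl. intros r Hr. exfalso. apply H. exists r. exact Hr. }
  destruct Hex as [r [K HK]].
  assert (r <= F) by (apply Hub; exists K; exact HK).
  destruct HK as [[[x0 Hx0] _] [_ [[u [_ [Hub' _]]] _]]].
  assert (0 <= r).
  { apply Rle_trans with (Rabs (dotR (IZRv u) x0 - dotR (IZRv u) x0)); [apply Rabs_pos|].
    apply Hub'. exists x0, x0. auto. }
  lra.
Qed.

Theorem lemma4p1 (d : nat) (K : Rd d -> Prop) (w F l : R) :
  convex_body K -> is_width K w -> 0 < w ->
  is_Flt d F -> is_lambda_d K l ->
  l <= F / w.
Proof.
  intros HK Hw Hwpos HF Hl.
  apply Rnot_lt_le; intro Hlt.
  pose proof (Flt_nonneg HF) as HF0.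
  assert (Hfw : 0 <= F / w) by (unfold Rdiv; apply Rmult_le_pos; [lra| left; apply Rinv_0_lt_compat; lra]).
  pose t := (F / w + l) / 2. pose t' := (t + l) / 2.
  assert (Ht : 0 < t) by (unfold t; lra).
  assert (Htt : t < t') by (unfold t', t; lra).
  assert (Htl : t' < l) by (unfold t', t; lra).
  assert (HFt : F < t * w).
  { assert (F / w < t) by (unfold t; lra).
    apply (Rmult_lt_compat_r w) in H; [|exact Hwpos].
    replace (F / w * w) with F in H by (field; lra). lra. }
  pose proof (cover HK Hw HF Ht HFt) as Hcov.
  assert (Hfull : full_lattice_span t' K).
  { apply NNPP; intro Hnf.
    destruct HK as [[x0 Hx0] HK'].
    destruct (@LA d (fun z => in_scaled_diff t' K z /\ is_lattice_point z)) as [u [Hu Hann]].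
    - split.
      + exists x0, x0. repeat split; auto. intros i. rewrite Rminus_diag Rmult_0_r. reflexivity.
      + intros i. exists Z0. reflexivity.
    - intros [v [Hv Hind]]. apply Hnf. exists v. split; auto.
    - apply (@flat d K t u (conj (ex_intro _ x0 Hx0) HK') Ht Hcov Hu).
      apply (@slide d K t t' u (conj (ex_intro _ x0 Hx0) HK') Ht Htt Hcov).
      intros z Hz Hzl. apply Hann. auto. }
  assert (l <= t') by (apply (proj1 Hl); split; [lra|exact Hfull]).
  lra.
Qed.
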